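(* Let $c\ge1$ be an integer and $\mathcal{P}$ a $c$-indistinguishable finite bias distribution. Then for every $1\le\ell\le c$, $\mathcal{R}_{\ell,\mathcal{P}}=E_p\bigl[\sqrt{p(1-p)}\bigr]>0$.
   Context: A finite bias distribution is a probability distribution $\mathcal{P}$ supported on a finite subset of $(0,1)$ that is symmetric: it outputs $a$ and $1-a$ with the same probability. $E_p$ is expectation over $p\sim\mathcal{P}$. $\sigma(p)=\sqrt{(1-p)/p}$; for integers $\ell\ge1$, $0\le x\le\ell$, $f_{\ell,x}(p)=p^x(1-p)^{\ell-x}(x\sigma(p)-(\ell-x)\sigma(1-p))$, $R_{\ell,x}=\max\{0,E_p[f_{\ell,x}(p)]\}$, and $\mathcal{R}_{\ell,\mathcal{P}}=E_p[-f_{\ell,0}(p)]-\sum_{x=1}^{\ell-1}\binom{\ell}{x}R_{\ell,x}$. $\mathcal{P}$ is $c$-indistinguishable if $\sum_{x=1}^{\ell-1}\binom{\ell}{x}R_{\ell,x}=0$ for all $2\le\ell\le c$. *)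

(* Defs.v *)
From HB Require Import structures.
From mathcomp Require Import all_boot all_order all_algebra.
From mathcomp Require Import reals.
Set Implicit Arguments. Unset Strict Implicit. Unset Printing Implicit Defensive.
Import Order.TTheory GRing.Theory Num.Theory.
Local Open Scope ring_scope.

Record bias_dist (R : realType) := BiasDist {
  supp : seq R;
  wt : R -> R;
  supp_uniq : uniq supp;
  supp_in01 : forall a, a \in supp -> 0 < a < 1;
  wt_pos : forall a, a \in supp -> 0 < wt a;
  wt_sum1 : \sum_(a <- supp) wt a = 1;
  supp_sym : forall a, a \in supp -> (1 - a) \in supp;
  wt_sym : forall a, a \in supp -> wt (1 - a) = wt a
}.

Section Defs.
Variable R : realType.

Definition Ep (P : bias_dist R) (g : R -> R) : R :=
  \sum_(a <- supp P) wt P a * g a.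

Definition sigma (p : R) : R := Num.sqrt ((1 - p) / p).

Definition fLx (l x : nat) (p : R) : R :=
  p ^+ x * (1 - p) ^+ (l - x) *
  (x%:R * sigma p - (l - x)%:R * sigma (1 - p)).

Definition RLx (P : bias_dist R) (l x : nat) : R :=
  Num.max 0 (Ep P (fLx l x)).

Definition calR (l : nat) (P : bias_dist R) : R :=
  Ep P (fun p => - fLx l 0 p) - \sum_(1 <= x < l) 'C(l, x)%:R * RLx P l x.

Definition indistinguishable (c : nat) (P : bias_dist R) : Prop :=
  forall l : nat, (2 <= l <= c)%N ->
    \sum_(1 <= x < l) 'C(l, x)%:R * RLx P l x = 0.
End Defs.

(* Main.v *)
Require Import Defs.
From HB Require Import structures.
From mathcomp Require Import all_boot all_order all_algebra.
From mathcomp Require Import reals.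
From mathcomp Require Import ring lra zify.
Import Order.TTheory GRing.Theory Num.Theory.
Local Open Scope ring_scope.

Section Aux.
Variable R : realType.
Implicit Types (P : bias_dist R) (f g : R -> R).

Definition sq (p : R) := Num.sqrt (p * (1 - p)).

Lemma sigma_mul (p : R) : 0 < p < 1 -> sigma p * p = sq p.
Proof.
move=> /andP[p0 p1]; rewrite /sigma /sq.
rewrite -[X in _ * X](@ger0_norm _ p) ?ltW // -sqrtr_sqr -sqrtrM.
  by congr Num.sqrt; field; rewrite gt_eqF.
by apply: divr_ge0; lra.
Qed.

Lemma sigma1_mul (p : R) : 0 < p < 1 -> sigma (1 - p) * (1 - p) = sq p.
Proof.
move=> /andP[p0 p1]; rewrite sigma_mul; last by apply/andP; split; lra.
by rewrite /sq mulrC; congr Num.sqrt; ring.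
Qed.

Lemma f_point (p : R) (x k : nat) : 0 < p < 1 ->
  p ^+ x * (1 - p) ^+ k * (x%:R * sigma p - k%:R * sigma (1 - p)) =
  x%:R * (sq p * p ^+ x.-1 * (1 - p) ^+ k) -
  k%:R * (sq p * p ^+ x * (1 - p) ^+ k.-1).
Proof.
move=> hp; rewrite -{1}(@sigma_mul p hp) -{1}(@sigma1_mul p hp).
case: x => [|x]; case: k => [|k] /=; rewrite ?exprS; ring.
Qed.

Lemma Ep_ext P f g : {in supp P, f =1 g} -> Ep P f = Ep P g.
Proof. by move=> h; rewrite /Ep big_seq_cond [RHS]big_seq_cond; apply: eq_bigr => a /andP[/h ->]. Qed.

Lemma EpB P f g : Ep P (fun p => f p - g p) = Ep P f - Ep P g.
Proof. by rewrite /Ep -sumrB; apply: eq_bigr => a _; rewrite mulrBr. Qed.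

Lemma EpZ P c f : Ep P (fun p => c * f p) = c * Ep P f.
Proof. by rewrite /Ep mulr_sumr; apply: eq_bigr => a _; rewrite mulrCA. Qed.

Lemma EpN P f : Ep P (fun p => - f p) = - Ep P f.
Proof. by rewrite /Ep -sumrN; apply: eq_bigr => a _; rewrite mulrN. Qed.

Lemma Ep_sum P n (F : nat -> R -> R) :
  Ep P (fun p => \sum_(j < n) F j p) = \sum_(j < n) Ep P (F j).
Proof.
rewrite /Ep exchange_big /=; apply: eq_bigr => a _; by rewrite mulr_sumr.
Qed.

Lemma Ep_sym P f : Ep P f = Ep P (fun p => f (1 - p)).
Proof.
have hperm : perm_eq (supp P) (map (fun a => 1 - a) (supp P)).
  apply: uniq_perm; first exact: supp_uniq.
    rewrite map_inj_uniq ?supp_uniq // => a b /= h; lra.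
  move=> a; apply/idP/idP => [ha|/mapP[b hb ->]]; last exact: supp_sym.
  by apply/mapP; exists (1 - a); [exact: supp_sym| ring].
rewrite /Ep (perm_big _ hperm) big_map big_seq [RHS]big_seq.
by apply: eq_bigr => a ha; rewrite wt_sym.
Qed.

Lemma Ep_pos P f : (forall a, a \in supp P -> 0 < f a) -> 0 < Ep P f.
Proof.
move=> h; rewrite /Ep.
have := wt_sum1 P; have := @wt_pos _ P; have := h.
case: (supp P) => [|a s] ha hw; first by rewrite big_nil => /eqP; rewrite eq_sym oner_eq0.
move=> _; rewrite big_cons; apply: ltr_pwDl.
  by apply: mulr_gt0; [apply: hw|apply: ha]; rewrite mem_head.
rewrite big_seq; apply: sumr_ge0 => b hb; apply: mulr_ge0; apply: ltW;
  [apply: hw|apply: ha]; by rewrite in_cons hb orbT.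
Qed.

Lemma sum_nat_eq0 (a b : nat) (F : nat -> R) :
  (forall i, (a <= i < b)%N -> 0 <= F i) -> \sum_(a <= i < b) F i = 0 ->
  forall i, (a <= i < b)%N -> F i = 0.
Proof.
move=> h0 hs i hi; apply/eqP; rewrite eq_le (h0 _ hi) andbT -hs.
have /andP[hai hib] := hi.
rewrite (@big_cat_nat _ _ _ i) //=; last exact: ltnW.
rewrite [\sum_(i <= _ < b) _]big_ltn //= addrCA lerDl; apply: addr_ge0; rewrite big_nat;
  apply: sumr_ge0 => j /andP[hj1 hj2]; apply: h0; apply/andP; split; lia.
Qed.

End Aux.
Arguments sq {R}.

Theorem proposition3 (R : realType) (c : nat) (P : bias_dist R) :
  (1 <= c)%N -> indistinguishable c P ->
  forall l : nat, (1 <= l <= c)%N ->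
    calR l P = Ep P (fun p => Num.sqrt (p * (1 - p))) /\
    0 < Ep P (fun p => Num.sqrt (p * (1 - p))).
Proof.
move=> c1 hind l /andP[l1 lc].
change (calR l P = Ep P (@sq R) /\ 0 < Ep P (@sq R)).
split; last first.
  apply: Ep_pos => a ha; rewrite /sq sqrtr_gt0.
  have /andP[a0 a1] := supp_in01 ha; apply: mulr_gt0; lra.
have hsum : forall x, (1 <= x < l)%N ->
    \sum_(1 <= i < l) 'C(l, i)%:R * RLx P l i = 0.
  move=> x hx; apply: hind; lia.
have Hf : forall x, (1 <= x < l)%N -> Ep P (fLx l x) <= 0.
  move=> x hx.
  have := @sum_nat_eq0 R 1 l (fun i => 'C(l, i)%:R * RLx P l i) _ (hsum x hx) x hx.
  have hge : forall i, 0 <= RLx P l i.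
    by move=> i; rewrite /RLx le_max lexx.
  move=> /(_ (fun i _ => mulr_ge0 (ler0n _ _) (hge i))) /eqP.
  rewrite mulf_eq0 pnatr_eq0 (negbTE (lt0n_neq0 _)); last by rewrite bin_gt0; lia.
  move=> /eqP h; apply: (@le_trans _ _ (RLx P l x)); last by rewrite h.
  by rewrite /RLx le_max lexx orbT.
have Hsym : forall x, (x <= l)%N -> Ep P (fLx l (l - x)) = - Ep P (fLx l x).
  move=> x hx; rewrite Ep_sym -EpN; apply: Ep_ext => p _.
  rewrite /fLx subKn // (_ : 1 - (1 - p) = p); last by ring.
  set a := sigma p; set b := sigma (1 - p); ring.
have Hz : forall x, (1 <= x < l)%N -> Ep P (fLx l x) = 0.
  move=> x hx; apply/eqP; rewrite eq_le Hf //= -oppr_le0 -Hsym; last by lia.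
  by apply: Hf; lia.
have [m hl] : exists m, l = m.+1 by exists l.-1; lia.
pose D j := Ep P (fun p => sq p * p ^+ j * (1 - p) ^+ (m - j)).
have Hpt : forall x, (1 <= x <= m)%N ->
    Ep P (fLx l x) = x%:R * D x.-1 - (l - x)%:R * D x.
  move=> x hx; rewrite /D -!EpZ -EpB; apply: Ep_ext => p hp.
  rewrite /fLx f_point; last exact: supp_in01 hp.
  have -> : (l - x = m - x.-1)%N by lia.
  by have -> : ((m - x.-1).-1 = m - x)%N by lia.
have Hx0 : Ep P (fun p => - fLx l 0 p) = l%:R * D 0.
  rewrite /D -EpZ; apply: Ep_ext => p hp.
  rewrite /fLx f_point; last exact: supp_in01 hp.
  by rewrite hl !subn0 /= mul0r sub0r opprK.
have Hrec : forall x, (1 <= x <= m)%N -> x%:R * D x.-1 = (l - x)%:R * D x.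
  move=> x hx; apply/eqP; rewrite -subr_eq0 -Hpt // Hz //; lia.
have HD : forall x, (x <= m)%N -> D x * 'C(m, x)%:R = D 0.
  elim=> [|x IH] hx; first by rewrite bin0 mulr1.
  have h := Hrec x.+1 ltac:(lia).
  have hx0 : (x.+1)%:R != 0 :> R by rewrite pnatr_eq0.
  apply: (mulfI hx0).
  rewrite mulrCA -natrM mul_bin_left natrM mulrA.
  have -> : (m - x)%N = (l - x.+1)%N by lia.
  by rewrite [D x.+1 * _]mulrC -h -mulrA /= IH // ltnW.
have HS : Ep P (@sq R) = l%:R * D 0.
  have -> : Ep P (@sq R) = Ep P (fun p =>
      \sum_(j < m.+1) 'C(m, j)%:R * (sq p * p ^+ j * (1 - p) ^+ (m - j))).
    apply: Ep_ext => p _.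
    have e : sq p = sq p * ((1 - p) + p) ^+ m by rewrite subrK expr1n mulr1.
    rewrite {1}e exprDn mulr_sumr.
    apply: eq_bigr => j _; rewrite -mulr_natl; ring.
  rewrite (@Ep_sum R P m.+1 (fun j p => 'C(m, j)%:R * (sq p * p ^+ j * (1 - p) ^+ (m - j)))).
  rewrite (eq_bigr (fun _ => D 0)); last first.
    by move=> j _; rewrite EpZ mulrC; apply: (HD j); rewrite -ltnS.
  by rewrite sumr_const card_ord hl mulr_natl.
rewrite /calR Hx0 HS.
have -> : \sum_(1 <= i < l) 'C(l, i)%:R * RLx P l i = 0.
  case: (ltnP 1 l) => hl2; first by apply: (hsum 1%N); lia.
  by rewrite big_geq.
by rewrite subr0.
Qed.
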